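(* Let $n\ge2$. Then $\mathcal{S}_n^\downarrow\subset\mathcal{S}_n$.
   Context: Let $\mathcal{C}$ be the set of smooth closed simple strictly convex (positive curvature) curves in $\mathbb{R}^2$, each parametrized by $\theta\in\mathbb{T}=\mathbb{R}/2\pi\mathbb{Z}$ so that the unit tangent at $C(\theta)$ is $(\cos\theta,\sin\theta)$, the outward normal is $\nu(\theta)=(\sin\theta,-\cos\theta)$, and $\rho(\theta)$ is the curvature there. Let $\Delta$ be the vertical axis, and $\mathcal{T}_n$ the set of closed curves symmetric with respect to $\Delta$ and invariant by the rotation of angle $2\pi/n$ about the origin. For $C\in\mathcal{C}\cap\mathcal{T}_n$ and $\theta\in(0,\pi/n]$, let $(0,\Pi(\theta))$ be the intersection point of the normal line to $C$ at $C(\theta)$ with $\Delta$ (with $\Pi(0)$ its limit as $\theta\searrow0$). Define $\mathcal{S}_n=\{C\in\mathcal{C}\cap\mathcal{T}_n:\ \Pi$ is increasing on $[0,\pi/n]\}$ and $\mathcal{S}_n^\downarrow=\{C\in\mathcal{C}\cap\mathcal{T}_n:\ \rho$ is decreasing on $[0,\pi/n]\}$. *)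

(* Defs.v *)
From Stdlib Require Import Reals.
From Coquelicot Require Import Coquelicot.
Open Scope R_scope.

(* A planar curve is given by its coordinate functions x, y : R -> R,
   theta |-> C(theta) = (x theta, y theta), theta read modulo 2*PI. *)

Definition smooth (f : R -> R) : Prop :=
  forall (k : nat) (t : R), ex_derive_n f k t.

Definition speed (x y : R -> R) (t : R) : R :=
  sqrt (Derive x t ^ 2 + Derive y t ^ 2).

(* Curvature rho(theta) of C at C(theta): in the tangent-angle
   parametrization, rho = d(theta)/ds = 1 / |C'(theta)|. *)
Definition curvature (x y : R -> R) (t : R) : R := / speed x y t.

(* The class \mathcal{C}: smooth closed simple curves, parametrized by the
   tangent angle theta (unit tangent at C(theta) is (cos theta, sin theta)),
   with positive (finite) curvature. *)
Definition in_C (x y : R -> R) : Prop :=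
  smooth x /\ smooth y /\
  (forall t, x (t + 2 * PI) = x t /\ y (t + 2 * PI) = y t) /\
  (forall s t, 0 <= s -> s < t -> t < 2 * PI -> (x s, y s) <> (x t, y t)) /\
  (forall t, 0 < speed x y t /\
             Derive x t = speed x y t * cos t /\
             Derive y t = speed x y t * sin t).

Definition in_T (n : nat) (x y : R -> R) : Prop :=
  (forall t, exists s, x s = - x t /\ y s = y t) /\
  (forall t, exists s,
      x s = cos (2 * PI / INR n) * x t - sin (2 * PI / INR n) * y t /\
      y s = sin (2 * PI / INR n) * x t + cos (2 * PI / INR n) * y t).

(* Pi(theta): ordinate of the intersection of the normal line at C(theta)
   (direction nu = (sin theta, - cos theta)) with the vertical axis,
   for theta in (0, PI/n]. *)
Definition Pi_fun (x y : R -> R) (t : R) : R :=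
  y t + x t * cos t / sin t.

Definition Pi_ext (x y : R -> R) (l : R) (t : R) : R :=
  if Req_EM_T t 0 then l else Pi_fun x y t.

Definition in_S (n : nat) (x y : R -> R) : Prop :=
  in_C x y /\ in_T n x y /\
  exists l : R,
    filterlim (Pi_fun x y) (at_right 0) (locally l) /\
    (forall a b, 0 <= a -> a <= b -> b <= PI / INR n ->
       Pi_ext x y l a <= Pi_ext x y l b).

Definition in_S_down (n : nat) (x y : R -> R) : Prop :=
  in_C x y /\ in_T n x y /\
  (forall a b, 0 <= a -> a <= b -> b <= PI / INR n ->
     curvature x y b <= curvature x y a).

(* Main.v *)
Require Import Defs.
From Stdlib Require Import Reals.
From Coquelicot Require Import Coquelicot.
From Stdlib Require Import Lra Lia ZArith.
Open Scope R_scope.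

Lemma dq f a d : derivable_pt_lim f a d -> is_lim (fun t => (f t - f a) / (t - a)) a d.
Proof.
  intros H. apply is_lim_spec. intros eps. destruct (H eps (cond_pos eps)) as [del Hd].
  exists del. intros u Hu Hne. simpl in Hu. unfold ball in Hu. simpl in Hu. unfold AbsRing_ball, abs, minus, plus, opp in Hu. simpl in Hu.
  assert (Hh : u - a <> 0) by (intro Z; apply Hne; exact (Rminus_diag_uniq u a Z)).
  specialize (Hd (u - a) Hh Hu). rewrite Rplus_minus in Hd. exact Hd.
Qed.

Section Aux.
Variables x y : R -> R.
Hypothesis HC : in_C x y.

Let s := speed x y.

Lemma exd_x t : ex_derive x t.
Proof. destruct HC as [Hx _]. exact (Hx 1%nat t). Qed.
Lemma exd_y t : ex_derive y t.
Proof. destruct HC as [_ [Hy _]]. exact (Hy 1%nat t). Qed.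
Lemma Dx t : Derive x t = s t * cos t.
Proof. destruct HC as [_ [_ [_ [_ H]]]]. apply H. Qed.
Lemma Dy t : Derive y t = s t * sin t.
Proof. destruct HC as [_ [_ [_ [_ H]]]]. apply H. Qed.
Lemma spos t : 0 < s t.
Proof. destruct HC as [_ [_ [_ [_ H]]]]. apply H. Qed.

Lemma dpl_x t : derivable_pt_lim x t (s t * cos t).
Proof. apply is_derive_Reals. rewrite <- Dx. apply Derive_correct, exd_x. Qed.
Lemma dpl_y t : derivable_pt_lim y t (s t * sin t).
Proof. apply is_derive_Reals. rewrite <- Dy. apply Derive_correct, exd_y. Qed.

Lemma per_nat (m : nat) t : x (t + 2 * PI * INR m) = x t /\ y (t + 2 * PI * INR m) = y t.
Proof.
  destruct HC as [_ [_ [Hp _]]].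
  induction m as [|m IH].
  - simpl. rewrite Rmult_0_r, Rplus_0_r. auto.
  - rewrite S_INR. replace (t + 2 * PI * (INR m + 1)) with ((t + 2 * PI * INR m) + 2 * PI) by ring.
    destruct (Hp (t + 2 * PI * INR m)) as [A B]. rewrite A, B. exact IH.
Qed.

Lemma per_Z (z : Z) t : x (t + 2 * PI * IZR z) = x t /\ y (t + 2 * PI * IZR z) = y t.
Proof.
  destruct (Z_le_gt_dec 0 z) as [Hz|Hz].
  - rewrite <- (Z2Nat.id z Hz), <- INR_IZR_INZ. apply per_nat.
  - assert (E : z = (- Z.of_nat (Z.to_nat (- z)))%Z) by lia.
    rewrite E, opp_IZR, <- INR_IZR_INZ.
    set (m := Z.to_nat (-z)).
    destruct (per_nat m (t + 2 * PI * - INR m)) as [A B].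
    replace (t + 2 * PI * - INR m + 2 * PI * INR m) with t in A, B by ring.
    auto.
Qed.

Lemma ymin t : 0 < t < 2 * PI -> y 0 < y t.
Proof.
  intros [H0 H1].
  destruct (Rle_lt_dec t PI) as [Ht|Ht].
  - destruct (MVT_cor2 y (fun u => s u * sin u) 0 t H0 (fun c _ => dpl_y c)) as [c [E Hc]].
    assert (0 < sin c) by (apply sin_gt_0; lra).
    pose proof (spos c). assert (0 < s c * sin c * (t - 0)) by (apply Rmult_lt_0_compat; [apply Rmult_lt_0_compat|]; lra).
    lra.
  - destruct (MVT_cor2 y (fun u => s u * sin u) t (2 * PI) H1 (fun c _ => dpl_y c)) as [c [E Hc]].
    assert (sin c < 0) by (apply sin_lt_0; lra).
    pose proof (spos c).
    assert (s c * sin c * (2 * PI - t) < 0).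
    { assert (0 < s c * (- sin c) * (2 * PI - t)) by (apply Rmult_lt_0_compat; [apply Rmult_lt_0_compat|]; lra). lra. }
    destruct HC as [_ [_ [Hp _]]]. destruct (Hp 0) as [_ B].
    rewrite Rplus_0_l in B. lra.
Qed.

Lemma x0 : (forall t, exists s, x s = - x t /\ y s = y t) -> x 0 = 0.
Proof.
  intros Hr. destruct (Hr 0) as [s0 [A B]].
  assert (HP := PI_RGT_0).
  destruct (archimed (s0 / (2 * PI))) as [U1 U2].
  set (k := up (s0 / (2 * PI))) in *.
  set (s' := s0 + 2 * PI * IZR (1 - k)).
  destruct (per_Z (1 - k) s0) as [C D]. fold s' in C, D.
  assert (L1 : s0 < 2 * PI * IZR k).
  { apply (Rmult_lt_reg_r (/ (2 * PI))). apply Rinv_0_lt_compat; lra.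
    replace (2 * PI * IZR k * / (2 * PI)) with (IZR k) by (field; lra). unfold Rdiv in U1. lra. }
  assert (L2 : 2 * PI * IZR k <= s0 + 2 * PI).
  { apply (Rmult_le_reg_r (/ (2 * PI))). apply Rinv_0_lt_compat; lra.
    replace (2 * PI * IZR k * / (2 * PI)) with (IZR k) by (field; lra).
    replace ((s0 + 2 * PI) * / (2 * PI)) with (s0 / (2 * PI) + 1) by (field; lra). lra. }
  assert (R1 : 0 <= s') by (unfold s'; rewrite minus_IZR; lra).
  assert (R2 : s' < 2 * PI) by (unfold s'; rewrite minus_IZR; lra).
  destruct (Req_dec s' 0) as [Z|Z].
  - rewrite Z in C. lra.
  - assert (y 0 < y s') by (apply ymin; lra). lra.
Qed.

Lemma dPi c : sin c <> 0 -> derivable_pt_lim (Pi_fun x y) c ((s c * sin c - x c) / (sin c) ^ 2).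
Proof.
  intros Hs. apply is_derive_Reals. unfold Pi_fun. auto_derive.
  - split; [apply exd_y|]. split; [apply exd_x|]. auto.
  - rewrite Dx, Dy. fold s. pose proof (sin2_cos2 c). field_simplify; auto.
    f_equal. unfold Rsqr in H. replace (s c * sin c ^ 3 + s c * sin c * cos c ^ 2 - sin c ^ 2 * x c - cos c ^ 2 * x c)
      with ((s c * sin c - x c) * (sin c * sin c + cos c * cos c)) by ring. rewrite H. ring.
Qed.

Lemma key (M : R) : M <= PI / 2 -> x 0 = 0 ->
  (forall a b, 0 <= a -> a <= b -> b <= M -> s a <= s b) ->
  forall t, 0 < t <= M -> x t <= s t * sin t.
Proof.
  intros HM Hx0 Hmono t Ht.
  assert (Hd : forall c, 0 <= c <= t -> derivable_pt_lim (fun u => x u - s t * sin u) c ((s c - s t) * cos c)).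
  { intros c _. apply is_derive_Reals. auto_derive; [apply exd_x|]. rewrite Dx. fold s. ring. }
  destruct (MVT_cor2 _ _ 0 t (proj1 Ht) Hd) as [c [E Hc]].
  rewrite Hx0, sin_0 in E.
  assert (s c <= s t) by (apply Hmono; lra).
  assert (0 <= cos c) by (apply cos_ge_0; lra).
  assert ((s t - s c) * cos c * t >= 0).
  { apply Rle_ge. apply Rmult_le_pos; [apply Rmult_le_pos|]; lra. }
  lra.
Qed.

Lemma Pi_mono (M : R) : M <= PI / 2 -> x 0 = 0 ->
  (forall a b, 0 <= a -> a <= b -> b <= M -> s a <= s b) ->
  forall a b, 0 < a -> a <= b -> b <= M -> Pi_fun x y a <= Pi_fun x y b.
Proof.
  intros HM Hx0 Hmono a b Ha Hab HbM.
  assert (HP := PI_RGT_0).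
  destruct (Req_dec a b) as [->|Hne]; [lra|].
  assert (Hsin : forall c, a <= c <= b -> 0 < sin c) by (intros; apply sin_gt_0; lra).
  assert (Hd : forall c, a <= c <= b -> derivable_pt_lim (Pi_fun x y) c ((s c * sin c - x c) / (sin c) ^ 2)).
  { intros c Hc. apply dPi. specialize (Hsin c Hc). lra. }
  destruct (MVT_cor2 _ _ a b ltac:(lra) Hd) as [c [E Hc]].
  assert (x c <= s c * sin c) by (apply (key M); auto; lra).
  assert (0 < sin c) by (apply Hsin; lra).
  assert (0 <= (s c * sin c - x c) / sin c ^ 2 * (b - a)).
  { apply Rmult_le_pos; [|lra]. unfold Rdiv. apply Rmult_le_pos; [lra|].
    left. apply Rinv_0_lt_compat. apply pow_lt. lra. }
  lra.
Qed.

Lemma Pi_lim : x 0 = 0 -> is_lim (Pi_fun x y) 0 (y 0 + s 0).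
Proof.
  intros Hx0.
  assert (Q1 : is_lim (fun t => (x t - x 0) / (t - 0)) 0 (s 0)).
  { replace (s 0) with (s 0 * cos 0) by (rewrite cos_0; ring). apply dq, dpl_x. }
  assert (Q2 : is_lim (fun t => (sin t - sin 0) / (t - 0)) 0 1).
  { rewrite <- cos_0. apply dq. apply derivable_pt_lim_sin. }
  assert (Q3 := is_lim_div _ _ _ _ _ Q1 Q2).
  simpl in Q3.
  assert (Q4 := Q3 ltac:(intro E; injection E; lra) I). clear Q3.
  assert (Cy : continuity_pt y 0).
  { apply derivable_continuous_pt. exact (exist _ _ (dpl_y 0)). }
  assert (Q5 := is_lim_mult _ _ _ _ _ (is_lim_continuity cos 0 (continuity_cos 0)) Q4 I).
  simpl in Q5.
  assert (Q6 := is_lim_plus _ _ _ _ _ (Finite (y 0 + cos 0 * (s 0 * / 1))) (is_lim_continuity y 0 Cy) Q5 eq_refl). rewrite cos_0 in Q6.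
  replace (y 0 + s 0) with (y 0 + 1 * (s 0 * / 1)) by field.
  apply (is_lim_ext_loc (fun t => y t + cos t * ((x t - x 0) / (t - 0) / ((sin t - sin 0) / (t - 0))))); [|exact Q6].
  assert (HP := PI_RGT_0).
  exists (mkposreal PI HP). intros u Hu Hne. simpl in Hu. unfold ball in Hu. simpl in Hu. unfold AbsRing_ball, abs, minus, plus, opp in Hu. simpl in Hu.
  assert (Hu0 : u <> 0) by exact Hne.
  assert (Hsu : sin u <> 0).
  { rewrite Ropp_0, Rplus_0_r in Hu. destruct (Rlt_or_le 0 u) as [Hp|Hp].
    - assert (0 < sin u) by (apply sin_gt_0; [lra| apply Rabs_def2 in Hu; lra]). lra.
    - assert (0 < sin (- u)) by (apply sin_gt_0; [lra| apply Rabs_def2 in Hu; lra]). rewrite sin_neg in H. lra. }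
  unfold Pi_fun. rewrite Hx0, sin_0. field. auto.
Qed.

End Aux.

Theorem proposition5p2 (n : nat) (hn : (2 <= n)%nat) (x y : R -> R) :
  in_S_down n x y -> in_S n x y.
Proof.
  intros [HC [HT Hcurv]]. split; [exact HC|]. split; [exact HT|].
  assert (Hx0 := x0 x y HC (proj1 HT)).
  assert (HP := PI_RGT_0).
  assert (Hn : 2 <= INR n) by (apply (le_INR 2); exact hn).
  assert (HM : PI / INR n <= PI / 2).
  { unfold Rdiv. apply Rmult_le_compat_l; [lra|]. apply Rinv_le_contravar; lra. }
  assert (HM0 : 0 < PI / INR n) by (apply Rdiv_lt_0_compat; lra).
  assert (Hmono : forall a b, 0 <= a -> a <= b -> b <= PI / INR n -> speed x y a <= speed x y b).
  { intros a b Ha Hab Hb. specialize (Hcurv a b Ha Hab Hb). unfold curvature in Hcurv.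
    destruct (Rle_or_lt (speed x y a) (speed x y b)) as [|Hlt]; [auto|].
    pose proof (spos x y HC b).
    assert (/ speed x y a < / speed x y b) by (apply Rinv_lt_contravar; [apply Rmult_lt_0_compat|]; lra).
    lra. }
  exists (y 0 + speed x y 0).
  assert (Hlim : filterlim (Pi_fun x y) (at_right 0) (locally (y 0 + speed x y 0))).
  { apply (filterlim_filter_le_1 (F := Rbar_locally' (Finite 0))).
    - intros P [d Hd]. exists d. intros u Hu Hpos. apply Hd; auto. intro E. rewrite E in Hpos. lra.
    - exact (Pi_lim x y HC Hx0). }
  split; [exact Hlim|].
  intros a b Ha Hab Hb. unfold Pi_ext.
  destruct (Req_EM_T a 0) as [Ea|Ea]; destruct (Req_EM_T b 0) as [Eb|Eb].
  - lra.
  - destruct (Rle_or_lt (y 0 + speed x y 0) (Pi_fun x y b)) as [|Hlt]; [auto|exfalso].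
    set (l := y 0 + speed x y 0) in *.
    assert (He : 0 < l - Pi_fun x y b) by lra.
    destruct (Hlim _ (locally_ball l (mkposreal _ He))) as [d Hd].
    set (t := Rmin (d / 2) b).
    assert (Ht0 : 0 < t) by (unfold t; apply Rmin_glb_lt; [pose proof (cond_pos d); lra| lra]).
    assert (Htb : t <= b) by apply Rmin_r.
    assert (Htd : t <= d / 2) by apply Rmin_l.
    assert (Hball : ball 0 d t).
    { unfold ball; simpl; unfold AbsRing_ball, abs, minus, plus, opp; simpl.
      rewrite Ropp_0, Rplus_0_r, Rabs_pos_eq by lra. pose proof (cond_pos d). lra. }
    specialize (Hd t Hball Ht0).
    unfold ball in Hd; simpl in Hd; unfold AbsRing_ball, abs, minus, plus, opp in Hd; simpl in Hd.
    apply Rabs_def2 in Hd. destruct Hd as [Hd1 Hd2].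
    assert (Pi_fun x y t <= Pi_fun x y b) by (apply (Pi_mono x y HC (PI / INR n)); auto).
    lra.
  - lra.
  - apply (Pi_mono x y HC (PI / INR n)); auto; lra.
Qed.
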